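(* Let $(X,\mu)$ and $(Y,\nu)$ be $\sigma$-finite measure spaces and let $\tau:Y\to X$ be a measurable nonsingular map (i.e. $\nu(\tau^{-1}(E))=0$ for every $\mu$-null set $E$). Let $0<p,q<\infty$ and let $\Phi:[0,\infty)\to[0,\infty)$ be such that $t\mapsto\Phi(t^{1/q})$ is a Young function. Then the composition operator $C_\tau f=f\circ\tau$ is bounded from $L^{p,q}(X,\mu)$ to $L^\Phi(Y,\nu)$ if and only if there exists a constant $D\ge1$ such that for all $\mu$-measurable sets $E\subset X$, \[ \nu(\tau^{-1}(E))\le\left\{\Phi\left(\frac{1}{D\mu(E)^{1/p}}\right)\right\}^{-1}. \]
   Context: A Young function is a map $\Psi:[0,\infty)\to[0,\infty)$ that is positive on $(0,\infty)$, convex, and satisfies $\lim_{t\downarrow0}\Psi(t)=\Psi(0)=0$. The Orlicz space $L^\Phi(Y,\nu)$ (for $\Phi$ with $\Phi((\cdot)^{1/q})$ a Young function) consists of measurable $g$ on $Y$ with $\int_Y\Phi(\epsilon|g|)\,d\nu<\infty$ for every $\epsilon>0$, with quasi-norm $\|g\|_{L^\Phi(Y)}=\inf\{\lambda>0:\int_Y\Phi(|g(y)|/\lambda)\,d\nu(y)\le1\}$. The Lorentz space $L^{p,q}(X,\mu)$ consists of measurable $f$ with $\|f\|_{L^{p,q}(X)}=\left(\int_0^\infty\left[t\,\mu(\{x:|f(x)|>t\})^{1/p}\right]^q\frac{dt}{t}\right)^{1/q}<\infty$. Boundedness means $\|C_\tau f\|_{L^\Phi(Y)}\le C\|f\|_{L^{p,q}(X)}$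 for some $C$ and all $f$. Conventions $1/0=\infty$, $\Phi(\infty)=\infty$, $1/\infty=0$ are used when $\mu(E)\in\{0,\infty\}$. *)

(* Defs.v *)
From HB Require Import structures.
From mathcomp Require Import all_boot all_order all_algebra.
From mathcomp Require Import all_classical all_reals all_analysis.
Set Implicit Arguments. Unset Strict Implicit. Unset Printing Implicit Defensive.
Import Order.TTheory GRing.Theory Num.Theory.
Import numFieldNormedType.Exports.
Local Open Scope classical_set_scope.
Local Open Scope ring_scope.

(* Young function Psi : [0,oo) -> [0,oo) (values on negative reals are irrelevant):
   nonnegative on [0,oo), positive on (0,oo), convex on [0,oo),
   Psi 0 = 0 and Psi t -> 0 as t -> 0+. *)
Definition young_function {R : realType} (Psi : R -> R) : Prop :=
  [/\ forall t, 0 <= t -> 0 <= Psi t,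
      forall t, 0 < t -> 0 < Psi t,
      forall x y l, 0 <= x -> 0 <= y -> 0 <= l -> l <= 1 ->
        Psi (l * x + (1 - l) * y) <= l * Psi x + (1 - l) * Psi y,
      Psi 0 = 0 &
      Psi t @[t --> 0^'+] --> 0].

Local Open Scope ereal_scope.

Definition lorentz_norm {d} {X : measurableType d} {R : realType}
  (mu : {measure set X -> \bar R}) (p q : R) (f : X -> R) : \bar R :=
  (\int[@lebesgue_measure R]_(t in `]0%R, +oo[%classic)
     (((t%:E * (mu [set x | (t < `|f x|)%R]) `^ (p^-1)) `^ q) * (t^-1)%:E))
  `^ (q^-1).

Definition in_lorentz {d} {X : measurableType d} {R : realType}
  (mu : {measure set X -> \bar R}) (p q : R) (f : X -> R) : Prop :=
  measurable_fun setT f /\ lorentz_norm mu p q f < +oo.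

Definition in_orlicz {d} {Y : measurableType d} {R : realType}
  (nu : {measure set Y -> \bar R}) (Phi : R -> R) (g : Y -> R) : Prop :=
  measurable_fun setT g /\
  forall eps : R, (0 < eps)%R ->
    \int[nu]_(y in setT) (Phi (eps * `|g y|))%:E < +oo.

Definition orlicz_norm {d} {Y : measurableType d} {R : realType}
  (nu : {measure set Y -> \bar R}) (Phi : R -> R) (g : Y -> R) : \bar R :=
  ereal_inf [set lam%:E | lam in
    [set lam : R | (0 < lam)%R /\
       \int[nu]_(y in setT) (Phi (`|g y| / lam))%:E <= 1]].

(* The bound {Phi(1/(D mu(E)^(1/p)))}^(-1), with the conventions
   1/0 = oo, Phi(oo) = oo, 1/oo = 0 (and 1/0 = oo if Phi vanishes). *)
Definition measure_bound {R : realType} (Phi : R -> R) (p D : R) (m : \bar R)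
  : \bar R :=
  match m with
  | r%:E => if r == 0%R then 0
            else let s := Phi (1 / (D * r `^ (p^-1)))%R in
                 if s == 0%R then +oo else (s^-1)%:E
  | +oo => +oo
  | -oo => +oo
  end.

(* Main.v *)
Require Import Defs.
From HB Require Import structures.
From mathcomp Require Import all_boot all_order all_algebra.
From mathcomp Require Import all_classical all_reals all_analysis.
From mathcomp Require Import zify ring lra.
From mathcomp Require Import measurable_realfun.
Import Order.TTheory GRing.Theory Num.Theory.
Import numFieldNormedType.Exports.
Local Open Scope classical_set_scope.
Local Open Scope ring_scope.

Section PhiProps.
Context {R : realType} (q : R) (Phi : R -> R).
Hypothesis hq : 0 < q.
Hypothesis hY : young_function (fun t => Phi (t `^ q^-1)).

Lemma powRqK x : 0 <= x -> (x `^ q) `^ q^-1 = x.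
Proof. by move=> x0; rewrite -powRrM mulfV ?gt_eqF// powRr1. Qed.

Lemma powR_le1 (l r : R) : 0 <= r -> 0 <= l -> l <= 1 -> l `^ r <= 1.
Proof.
move=> r0 l0 l1; have := @ge0_ler_powR _ r r0 l 1.
by rewrite !nnegrE powR1 => ->.
Qed.

Lemma Phi0 : Phi 0 = 0.
Proof.
case: hY => _ _ _ + _; rewrite powR0 //.
by rewrite invr_eq0 gt_eqF.
Qed.

Lemma Phi_ge0 x : 0 <= x -> 0 <= Phi x.
Proof.
move=> x0; case: hY => + _ _ _ _ => /(_ (x `^ q) (powR_ge0 _ _)).
by rewrite powRqK.
Qed.

Lemma Phi_gt0 x : 0 < x -> 0 < Phi x.
Proof.
move=> x0; case: hY => _ + _ _ _ => /(_ (x `^ q) (powR_gt0 _ x0)).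
by rewrite powRqK // ltW.
Qed.

Lemma Phi_conv l x : 0 <= l -> l <= 1 -> 0 <= x -> Phi (l * x) <= l `^ q * Phi x.
Proof.
move=> l0 l1 x0.
have lq1 : l `^ q <= 1 by apply: powR_le1 => //; rewrite ltW.
case: hY => _ _ + + _ => /(_ (x `^ q) 0 (l `^ q) (powR_ge0 _ _) (lexx _) (powR_ge0 _ _) lq1) + P0.
rewrite P0 !mulr0 !addr0 -powRM // powRqK //.
  by rewrite powRqK.
exact: mulr_ge0.
Qed.

Lemma Phi_mono x y : 0 <= x -> x <= y -> Phi x <= Phi y.
Proof.
move=> x0 xy.
have [y0|y0] := eqVneq y 0.
  by move: xy; rewrite y0 => xy; have -> : x = 0 by apply/eqP; rewrite eq_le x0 xy.
have yp : 0 < y by rewrite lt_neqAle eq_sym y0 (le_trans x0 xy).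
have -> : x = (x / y) * y by rewrite divfK.
apply: (le_trans (Phi_conv _ _ _ _ _)).
- exact: divr_ge0 (ltW yp).
- by rewrite ler_pdivrMr // mul1r.
- exact: ltW.
rewrite ler_piMl ?Phi_ge0 ?(ltW yp) //.
apply: powR_le1; first by rewrite ltW.
- exact: divr_ge0 (ltW yp).
- by rewrite ler_pdivrMr // mul1r.
Qed.

End PhiProps.

Lemma le_integral_nm {d} {T : measurableType d} {R : realType}
  (mu : {measure set T -> \bar R}) (D : set T) (f g : T -> \bar R) :
  (forall x, D x -> (0 <= f x)%E) -> (forall x, D x -> (f x <= g x)%E) ->
  (\int[mu]_(x in D) f x <= \int[mu]_(x in D) g x)%E.
Proof.
move=> f0 fg.
have g0 : forall x, D x -> (0 <= g x)%E by move=> x Dx; apply: le_trans (f0 _ Dx) (fg _ Dx).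
rewrite !ge0_integralE //; apply: le_ereal_sup => _ [h /= hf <-].
exists h => //= x; apply: le_trans (hf x) _.
rewrite /patch; case: ifPn => // /set_mem; exact: fg.
Qed.

Definition zz (n : nat) : int :=
  if (n %% 2 == 0)%N then (n %/ 2)%:Z else - ((n %/ 2).+1)%:Z.

Lemma zz_inj : injective zz.
Proof.
move=> m n; rewrite /zz.
case: ifP => hm; case: ifP => hn => H; lia.
Qed.

Lemma zz_surj (k : int) : exists n, zz n = k.
Proof.
case: k => a.
- exists (a.*2)%N; rewrite /zz; have -> : (a.*2 %% 2 == 0)%N by lia.
  by have -> : (a.*2 %/ 2)%N = a by lia.
- exists (a.*2.+1)%N; rewrite /zz NegzE.
  have -> : (a.*2.+1 %% 2 == 0)%N = false by lia.
  by have -> : (a.*2.+1 %/ 2)%N = a by lia.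
Qed.

Section Pow2.
Context {R : realType}.

Definition p2 (k : int) : R := 2 `^ (k%:~R).

Lemma p2_gt0 k : 0 < p2 k.
Proof. by rewrite /p2 powR_gt0. Qed.

Lemma p2S k : p2 (k + 1) = 2 * p2 k.
Proof.
rewrite /p2 intrD powRD; last by rewrite pnatr_eq0 implybT.
by rewrite powRr1 // mulrC.
Qed.

Lemma p2_le k l : (k <= l)%R -> p2 k <= p2 l.
Proof. by move=> kl; rewrite /p2 ler_powR ?ler1n // ler_int. Qed.

Lemma p2_cover (t : R) : 0 < t -> exists k : int, p2 k < t <= p2 (k + 1).
Proof.
move=> t0; pose x := ln t / ln 2.
have l2 : 0 < ln (2 : R) by rewrite ln_gt0 // ltr1n.
exists (Num.ceil x - 1).
have := real_ceil_itv (num_real x); rewrite subrK => /andP[h1 h2].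
have E y : p2 y = expR (y%:~R * ln 2) by rewrite /p2 /powR pnatr_eq0.
have Et : expR (ln t) = t by rewrite lnK // posrE.
rewrite !E -Et ltr_expR ler_expR.
by rewrite -ltr_pdivlMr // -ler_pdivrMr // h1 h2.
Qed.

Lemma p2_uniq (k l : int) (t : R) : p2 k < t <= p2 (k + 1) ->
  p2 l < t <= p2 (l + 1) -> k = l.
Proof.
move=> /andP[a1 a2] /andP[b1 b2].
case: (ltgtP k l) => // kl.
- have H : p2 (k + 1) <= p2 l by apply: p2_le; rewrite lezD1.
  by have := lt_le_trans b1 (le_trans a2 H); rewrite ltxx.
- have H : p2 (l + 1) <= p2 k by apply: p2_le; rewrite lezD1.
  by have := lt_le_trans a1 (le_trans b2 H); rewrite ltxx.
Qed.

End Pow2.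

Section TermBound.
Context {R : realType} (p q D : R) (Phi : R -> R).
Hypothesis hp : 0 < p.
Hypothesis hq : 0 < q.
Hypothesis hD : 1 <= D.
Hypothesis hY : young_function (fun t => Phi (t `^ q^-1)).

Lemma term_bound (sig eps : R) (M : \bar R) : 0 < sig -> 0 < eps -> (0 <= M)%E ->
  (((2 * eps * D) `^ q)%:E * ((sig%:E * M `^ p^-1) `^ q) <= 1)%E ->
  ((Phi (2 * eps * sig))%:E * measure_bound Phi p D M <=
    ((2 * eps * D) `^ q)%:E * ((sig%:E * M `^ p^-1) `^ q))%E.
Proof.
move=> s0 e0; have D0 : 0 < D by apply: lt_le_trans hD.
case: M => [r| |] //; rewrite ?lee_fin => r0.
- rewrite /measure_bound; have [->|rn0] := eqVneq r 0.
    by rewrite mule0 => _; apply: mule_ge0; rewrite ?lee_fin ?powR_ge0 ?poweR_ge0.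
  have rp : 0 < r by rewrite lt_neqAle eq_sym rn0.
  have rpp : 0 < r `^ p^-1 by apply: powR_gt0.
  set u := 1 / (D * r `^ p^-1).
  have u0 : 0 < u by rewrite divr_gt0 // mulr_gt0.
  have s0' := @Phi_gt0 _ q Phi hq hY _ u0.
  rewrite gt_eqF //= -!EFinM !lee_fin.
  set lam := 2 * eps * D * (sig * r `^ p^-1).
  have lam0 : 0 <= lam by rewrite !mulr_ge0 // ltW.
  have h1 : 0 <= 2 * eps * D by rewrite !mulr_ge0 // ltW.
  have h2 : 0 <= sig * r `^ p^-1 by rewrite mulr_ge0 // ltW.
  rewrite -powRM // -/lam => lamq.
  have lam1 : lam <= 1.
    rewrite leNgt; apply/negP => l1.
    have := @gt0_ltr_powR _ q hq 1 lam; rewrite !nnegrE powR1 => /(_ ler01 lam0 l1).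
    by rewrite ltNge lamq.
  have -> : 2 * eps * sig = lam * u.
    rewrite /lam /u; field; apply/andP; split; rewrite gt_eqF //.
  rewrite ler_pdivrMr //; apply: (le_trans (@Phi_conv _ q Phi hq hY _ _ _ _ _)) => //.
  exact: ltW.
- move=> H; exfalso; move: H.
  rewrite poweRyr ?invr_eq0 ?gt_eqF // mulry gtr0_sg // mul1e.
  rewrite poweRyr ?gt_eqF // mulry gtr0_sg ?powR_gt0 ?mulr_gt0 // mul1e.
  by rewrite leNgt ltey.
Qed.

Lemma term_fin (sig eps : R) (M : \bar R) : (0 <= M)%E -> (M < +oo)%E ->
  ((Phi (2 * eps * sig))%:E * measure_bound Phi p D M < +oo)%E.
Proof.
have D0 : 0 < D by apply: lt_le_trans hD.
case: M => [r| |] // r0 _; rewrite /measure_bound.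
case: eqP => rn0; first by rewrite mule0 ltey.
have rp : 0 < r by rewrite lt_neqAle eq_sym; apply/andP; split => //; apply/eqP.
have rpp : 0 < r `^ p^-1 by apply: powR_gt0.
have u0 : 0 < 1 / (D * r `^ p^-1) by rewrite divr_gt0 // mulr_gt0.
by rewrite gt_eqF ?(@Phi_gt0 _ q Phi hq hY) // -EFinM ltey.
Qed.

End TermBound.

Section Lorentz.
Context {R : realType} {d} {X : measurableType d} (mu : {measure set X -> \bar R}).
Context (p q : R) (f : X -> R).
Hypothesis hp : 0 < p.
Hypothesis hq : 0 < q.
Hypothesis mf : measurable_fun setT f.

Definition dm (t : R) : \bar R := mu [set x | t < `|f x|].
Definition bb (t : R) : \bar R := ((t%:E * (dm t) `^ p^-1) `^ q)%E.
Definition LF (t : R) : \bar R := (((t%:E * (dm t) `^ p^-1) `^ q) * (t^-1)%:E)%E.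
Definition sg (n : nat) : R := p2 (zz n).
Definition Lint := (\int[@lebesgue_measure R]_(t in `]0%R, +oo[%classic) LF t)%E.

Lemma lorentz_normE : lorentz_norm mu p q f = (Lint `^ q^-1)%E.
Proof. by []. Qed.

Lemma mS t : measurable [set x | t < `|f x|].
Proof.
rewrite (_ : [set x | t < `|f x|] = setT `&` ((fun x => `|x|) \o f) @^-1` `]t, +oo[).
  by apply: (measurableT_comp (@normr_measurable _ _) mf) => //; exact: measurable_itv.
by rewrite setTI; apply/seteqP; split => x /=; rewrite in_itv /= andbT.
Qed.

Lemma dm_le s t : s <= t -> (dm t <= dm s)%E.
Proof.
move=> st; apply: le_measure; rewrite ?inE; try exact: mS.
by move=> x /= /(le_lt_trans st).
Qed.

Lemma sg_gt0 n : 0 < sg n. Proof. exact: p2_gt0. Qed.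

Definition kap : R := (2^-1) `^ q * 2^-1.

Lemma LF_ge0 t : 0 < t -> (0 <= LF t)%E.
Proof. by move=> t0; rewrite mule_ge0 ?poweR_ge0 // lee_fin invr_ge0 ltW. Qed.

Lemma lorentz_lower : (\sum_(n <oo) (kap%:E * bb (sg n)) <= Lint)%E.
Proof.
pose J n : set R := [set` `]sg n / 2, sg n]].
pose c n := (((sg n / 2)%:E * (dm (sg n)) `^ p^-1) `^ q * ((sg n)^-1)%:E)%E.
have c0 n : (0 <= c n)%E.
  by rewrite mule_ge0 ?poweR_ge0 // lee_fin invr_ge0 ltW ?sg_gt0.
have eqc n : (c n * (sg n / 2)%:E = kap%:E * bb (sg n))%E.
  rewrite /c /bb /kap; set M := (dm (sg n) `^ p^-1)%E.
  have s0 := sg_gt0 n.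
  have -> : ((sg n / 2)%:E * M = (2^-1)%:E * ((sg n)%:E * M))%E.
    by rewrite muleA -EFinM mulrC.
  rewrite poweRM ?lee_fin ?invr_ge0 ?ler0n ?mule_ge0 ?poweR_ge0 ?lee_fin ?ltW //.
  rewrite poweR_EFin (muleC _ ((sg n)^-1)%:E) (muleC _ ((sg n / 2)%:E)) !muleA -!EFinM.
  congr (_%:E * _)%E.
  by field; rewrite gt_eqF.
have int_step : (\int[@lebesgue_measure R]_(t in `]0%R, +oo[%classic)
    (\sum_(n <oo) (c n * (\1_(J n) t)%:E)) = \sum_(n <oo) (kap%:E * bb (sg n)))%E.
  rewrite integral_nneseries //; last 2 first.
  - move=> n; apply: measurable_funeM; apply/measurable_EFinP.
    by apply: measurable_indic; exact: measurable_itv.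
  - by move=> n t _; rewrite mule_ge0 // lee_fin indic_ge0.
  apply: eq_eseriesr => n _.
  rewrite ge0_integralZl //; last first.
  - by apply/measurable_EFinP; apply: measurable_indic; exact: measurable_itv.
  rewrite integral_indic //; last exact: measurable_itv.
  rewrite setIidl; last first.
    move=> t /=; rewrite !in_itv /= andbT => /andP[+ _]; apply: le_lt_trans.
    by rewrite divr_ge0 // ltW ?sg_gt0.
  have LJ : lebesgue_measure (J n) = ((sg n / 2)%:E : \bar R).
    rewrite /J lebesgue_measure_itv /= lte_fin ltr_pdivrMr ?ltr0n // ltr_pMr ?sg_gt0 ?ltr1n //.
    by rewrite -EFinB; congr (_%:E); field.
  by rewrite [X in (_ * X)%E](_ : _ = (sg n / 2)%:E) ?eqc //; exact: LJ.
rewrite -int_step; apply: le_integral_nm.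
  by move=> t _; apply: nneseries_ge0 => n _ _; rewrite mule_ge0 // lee_fin indic_ge0.
move=> t /=; rewrite in_itv /= andbT => t0.
have [k /andP[k1 k2]] := @p2_cover R t t0.
have [n zn] := zz_surj (k + 1).
have Jn : J n t.
  rewrite /J /= in_itv /= /sg zn p2S; have -> : 2 * (p2 k : R) / 2 = p2 k by field.
  by rewrite k1 /= -p2S.
rewrite (@nneseriesD1 _ _ n xpredT) //; last by move=> j _; rewrite mule_ge0 // lee_fin indic_ge0.
rewrite eseries0; last first.
  move=> j _ /= jn; rewrite indicE; case: (boolP (t \in J j)); last by rewrite mule0.
  move=> /set_mem; rewrite /J /= in_itv /= => /andP[a1 a2].
  exfalso; move/negP: jn; apply; apply/eqP; apply: zz_inj; rewrite zn.
  have e : sg j = 2 * p2 (zz j - 1) by rewrite /sg -p2S subrK.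
  have u := @p2_uniq R (zz j - 1) k t.
  suff h : zz j - 1 = k by rewrite -h subrK.
  apply: u; last by rewrite k1 k2.
  rewrite subrK -/(sg j) a2 andbT.
  by move: a1; rewrite e; have -> : 2 * (p2 (zz j - 1) : R) / 2 = p2 (zz j - 1) by field.
rewrite adde0 indicE mem_set // mule1.
move: Jn; rewrite /J /= in_itv /= => /andP[a1 a2].
have s0 := sg_gt0 n.
have t0' : 0 <= t by apply: ltW.
have s0' : 0 <= sg n / 2 by rewrite divr_ge0 // ltW.
apply: lee_pmul.
- exact: poweR_ge0.
- by rewrite lee_fin invr_ge0 ltW.
- apply: gt0_ler_poweR; first exact: ltW.
  + by rewrite in_itv /= leey andbT mule_ge0 ?poweR_ge0 // lee_fin.
  + by rewrite in_itv /= leey andbT mule_ge0 ?poweR_ge0 // lee_fin.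
  apply: lee_pmul; rewrite ?poweR_ge0 ?lee_fin //; first exact: ltW.
  apply: gt0_ler_poweR; first by rewrite invr_ge0 ltW.
  + by rewrite in_itv /= leey andbT measure_ge0.
  + by rewrite in_itv /= leey andbT measure_ge0.
  exact: dm_le.
- by rewrite lee_fin lef_pV2 // posrE.
Qed.

End Lorentz.

Section Orlicz.
Context {R : realType} {d2} {Y : measurableType d2} (nu : {measure set Y -> \bar R}).
Context (q : R) (Phi : R -> R) (g : Y -> R).
Hypothesis hq : 0 < q.
Hypothesis hY : young_function (fun t => Phi (t `^ q^-1)).
Hypothesis mg : measurable_fun setT g.

Definition AA (n : nat) : set Y := [set y | sg n < `|g y| <= 2 * sg n].

Lemma mAA n : measurable (AA n).
Proof.
rewrite (_ : AA n = setT `&` ((fun x => `|x|) \o g) @^-1` `]sg n, 2 * sg n]).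
  by apply: (measurableT_comp (@normr_measurable _ _) mg) => //; exact: measurable_itv.
by rewrite setTI; apply/seteqP; split => x /=; rewrite in_itv /=.
Qed.

Lemma orlicz_upper (eps : R) : 0 < eps ->
  (\int[nu]_(y in setT) (Phi (eps * `|g y|))%:E <=
   \sum_(n <oo) ((Phi (2 * eps * sg n))%:E * nu (AA n)))%E.
Proof.
move=> e0.
have c0 n : (0 <= (Phi (2 * eps * sg n))%:E)%E.
  by rewrite lee_fin (@Phi_ge0 _ q Phi hq hY) // !mulr_ge0 // ltW ?sg_gt0.
have -> : (\sum_(n <oo) ((Phi (2 * eps * sg n))%:E * nu (AA n)) =
    \int[nu]_(y in setT) \sum_(n <oo) ((Phi (2 * eps * sg n))%:E * (\1_(AA n) y)%:E))%E.
  rewrite integral_nneseries //; last 2 first.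
  - move=> n; apply: measurable_funeM; apply/measurable_EFinP.
    exact: measurable_indic (mAA n).
  - by move=> n t _; rewrite mule_ge0 // lee_fin indic_ge0.
  apply: eq_eseriesr => n _.
  rewrite ge0_integralZl //; last first.
  - by apply/measurable_EFinP; exact: measurable_indic (mAA n).
  by rewrite integral_indic ?setIT //; exact: mAA.
apply: le_integral_nm.
  by move=> y _; rewrite lee_fin (@Phi_ge0 _ q Phi hq hY) // mulr_ge0 // ltW.
move=> y _.
have [g0|gn0] := eqVneq (g y) 0.
  rewrite g0 normr0 mulr0 (@Phi0 _ q Phi hq hY).
  by apply: nneseries_ge0 => n _ _; rewrite mule_ge0 // lee_fin indic_ge0.
have t0 : 0 < `|g y| by rewrite normr_gt0.
have [k /andP[k1 k2]] := @p2_cover R _ t0.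
have [n zn] := zz_surj k.
rewrite (@nneseriesD1 _ _ n xpredT) //; last first.
  by move=> j _; rewrite mule_ge0 // lee_fin indic_ge0.
apply: le_trans (leeDl _ _); last first.
  by apply: nneseries_ge0 => j _ _; rewrite mule_ge0 // lee_fin indic_ge0.
have An : AA n y by rewrite /AA /= /sg zn k1 -p2S k2.
rewrite indicE mem_set // mule1 lee_fin.
apply: (@Phi_mono _ q Phi hq hY); first by rewrite mulr_ge0 // ltW.
by rewrite [2 * eps]mulrC -mulrA ler_pM2l // /sg zn -p2S.
Qed.

End Orlicz.

Section Series.
Context {R : realType}.
Local Open Scope ereal_scope.

Lemma term_le_tail (u : (\bar R)^nat) n : (forall k, 0 <= u k) ->
  u n <= \sum_(n <= k <oo) u k.
Proof.
move=> u0; have := @nneseries_lim_ge R u xpredT n n.+1 (fun k _ _ => u0 k).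
by rewrite big_nat1.
Qed.

Lemma tail_le (u : (\bar R)^nat) N : (forall k, 0 <= u k) ->
  \sum_(N <= k <oo) u k <= \sum_(k <oo) u k.
Proof.
move=> u0; rewrite (@nneseries_split R u 0 N) // add0n.
by apply: leeDr; apply: sume_ge0 => k _.
Qed.

Lemma term_le_series (u : (\bar R)^nat) n : (forall k, 0 <= u k) ->
  u n <= \sum_(k <oo) u k.
Proof. move=> u0; exact: le_trans (term_le_tail u n u0) (tail_le u n u0). Qed.

End Series.

Section Suff.
Context {R : realType} {d1} {X : measurableType d1} {d2} {Y : measurableType d2}.
Context (mu : {measure set X -> \bar R}) (nu : {measure set Y -> \bar R}).
Context (tau : Y -> X) (p q D : R) (Phi : R -> R).
Hypothesis mtau : measurable_fun setT tau.
Hypothesis hp : 0 < p.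
Hypothesis hq : 0 < q.
Hypothesis hY : young_function (fun t => Phi (t `^ q^-1)).
Hypothesis hD : 1 <= D.
Hypothesis hB : forall E : set X, measurable E ->
  (nu (tau @^-1` E) <= measure_bound Phi p D (mu E))%E.
Context (f : X -> R).
Hypothesis mf : measurable_fun setT f.

Let g := f \o tau.
Let mg : measurable_fun setT g := measurableT_comp mf mtau.
Let b n := bb mu p q f (sg n).
Let T eps n := ((Phi (2 * eps * sg n))%:E * nu (AA g n))%E.

Lemma b_ge0 n : (0 <= b n)%E. Proof. exact: poweR_ge0. Qed.

Lemma T_ge0 eps n : 0 < eps -> (0 <= T eps n)%E.
Proof.
move=> e0; rewrite mule_ge0 // lee_fin (@Phi_ge0 _ q Phi hq hY) //.
by rewrite !mulr_ge0 // ltW ?sg_gt0.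
Qed.

Lemma T_le eps n : 0 < eps ->
  (T eps n <= (Phi (2 * eps * sg n))%:E * measure_bound Phi p D (dm mu f (sg n)))%E.
Proof.
move=> e0; apply: lee_wpmul2l.
  by rewrite lee_fin (@Phi_ge0 _ q Phi hq hY) // !mulr_ge0 // ltW ?sg_gt0.
apply: (le_trans _ (hB _ (mS f mf (sg n)))).
apply: le_measure; rewrite ?inE.
- exact: mAA.
- rewrite -[X in measurable X]setTI; apply: mtau => //; exact: mS.
by move=> y /= /andP[].
Qed.

Lemma T_bound eps n : 0 < eps ->
  (((2 * eps * D) `^ q)%:E * b n <= 1)%E ->
  (T eps n <= ((2 * eps * D) `^ q)%:E * b n)%E.
Proof.
move=> e0 h; apply: le_trans (T_le eps n e0) _.
apply: (@term_bound _ p q D Phi hp hq hD hY) => //.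
- exact: sg_gt0.
Qed.

Lemma T_fin eps n : 0 < eps -> (b n < +oo)%E -> (T eps n < +oo)%E.
Proof.
move=> e0 bn; apply: le_lt_trans (T_le eps n e0) _.
apply: (@term_fin _ p q D Phi hq hD hY); first exact: measure_ge0.
rewrite ltNge leye_eq; apply/negP => /eqP dmy.
move: bn; rewrite /b /bb dmy poweRyr ?invr_eq0 ?gt_eqF //.
by rewrite mulry gtr0_sg ?sg_gt0 // mul1e poweRyr ?gt_eqF // ltxx.
Qed.

Definition Cst : R := 2 * D * (kap q)^-1 `^ q^-1.

Lemma kap_gt0 : 0 < kap q.
Proof. by rewrite /kap mulr_gt0 ?powR_gt0 ?invr_gt0 ?ltr0n. Qed.

Lemma key_bound (w eps : R) : 0 < eps -> 0 <= w ->
  (\sum_(n <oo) b n <= w%:E)%E ->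
  (2 * eps * D) `^ q * w <= 1 ->
  (\int[nu]_(y in setT) (Phi (eps * `|g y|))%:E <= 1)%E.
Proof.
move=> e0 w0 Sb Kw.
set K := (2 * eps * D) `^ q.
have K0 : 0 <= K by apply: powR_ge0.
apply: le_trans (@orlicz_upper _ _ _ nu q Phi g hq hY mg eps e0) _.
apply: (@le_trans _ _ (\sum_(n <oo) (K%:E * b n))%E).
  apply: lee_nneseries => [k _ _|k _]; first exact: T_ge0.
  apply: T_bound => //.
  apply: (@le_trans _ _ (K%:E * w%:E)%E); last by rewrite -EFinM lee_fin.
  apply: lee_wpmul2l; first by rewrite lee_fin.
  apply: le_trans Sb; apply: term_le_series; exact: b_ge0.
rewrite nneseriesZl; last by move=> k _; exact: b_ge0.
apply: le_trans (_ : (K%:E * w%:E <= 1)%E); last by rewrite -EFinM lee_fin.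
by apply: lee_wpmul2l; first by rewrite lee_fin.
Qed.

Lemma suff_f : (lorentz_norm mu p q f < +oo)%E ->
  in_orlicz nu Phi (f \o tau) /\
  (orlicz_norm nu Phi (f \o tau) <= Cst%:E * lorentz_norm mu p q f)%E.
Proof.
move=> NF.
have I0 : (0 <= Lint mu p q f)%E.
  by apply: integral_ge0 => t /=; rewrite in_itv /= andbT => t0; exact: LF_ge0.
have Ify : (Lint mu p q f < +oo)%E.
  by move: NF; rewrite lorentz_normE; apply: lty_poweRy; rewrite invr_eq0 gt_eqF.
have LL := @lorentz_lower _ _ _ mu p q f hp hq mf.
rewrite lorentz_normE; move: I0 Ify LL; case E: (Lint mu p q f) => [i| |] // i0 _ LL.
rewrite lee_fin in i0.
have k0 := kap_gt0.
set w := (kap q)^-1 * i.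
have w0 : 0 <= w by rewrite mulr_ge0 // invr_ge0 ltW.
have Sb : (\sum_(n <oo) b n <= w%:E)%E.
  move: LL; rewrite nneseriesZl; last by move=> k _; exact: b_ge0.
  by rewrite -lee_pdivlMl // EFinM.
have Sfin : (\sum_(n <oo) b n < +oo)%E by apply: le_lt_trans Sb _; rewrite ltey.
have bfin n : (b n < +oo)%E.
  by apply: le_lt_trans Sfin; apply: term_le_series; exact: b_ge0.
split.
  split; first exact: mg.
  move=> eps e0.
  apply: le_lt_trans (@orlicz_upper _ _ _ nu q Phi g hq hY mg eps e0) _.
  set K := (2 * eps * D) `^ q.
  have K0 : 0 < K by rewrite powR_gt0 // !mulr_gt0 // (lt_le_trans _ hD).
  have tc := nneseries_tail_cvg Sfin (fun k _ => b_ge0 k).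
  have H1 : ereal_nbhs 0%E (fun u => u < (K^-1)%:E)%E.
    by apply: open_ereal_lt'; rewrite lte_fin invr_gt0.
  have := tc _ H1; case=> N _ HN.
  rewrite (@nneseries_split R _ 0 N); last by move=> k _; exact: T_ge0.
  rewrite add0n; apply: lte_add_pinfty.
    by apply: lte_sum_pinfty => k _; apply: T_fin.
  rewrite eseries_cond.
  apply: (@le_lt_trans _ _ (\sum_(i <oo | true && (N <= i)%N) (K%:E * b i))%E).
    apply: lee_nneseries => [k _ _|k /= Nk]; first exact: T_ge0.
    apply: T_bound => //.
    have : (b k < (K^-1)%:E)%E.
      apply: le_lt_trans (HN k Nk); apply: term_le_tail; exact: b_ge0.
    move=> bk; apply: (@le_trans _ _ (K%:E * (K^-1)%:E)%E).
      by apply: lee_wpmul2l; [rewrite lee_fin ltW | exact: ltW].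
    by rewrite -EFinM mulfV ?gt_eqF.
  rewrite nneseriesZl; last by move=> k _; exact: b_ge0.
  apply: (@le_lt_trans _ _ (K%:E * \sum_(i <oo) b i)%E).
    apply: lee_wpmul2l; first by rewrite lee_fin ltW.
    by apply: subset_lee_nneseries => // k _; exact: b_ge0.
  apply: (@le_lt_trans _ _ (K%:E * w%:E)%E); last by rewrite -EFinM ltey.
  by apply: lee_wpmul2l; first by rewrite lee_fin ltW.
rewrite poweR_EFin -EFinM.
set n := i `^ q^-1.
have n0 : 0 <= n by apply: powR_ge0.
have D0 : 0 < D by apply: lt_le_trans hD.
have C0 : 0 <= Cst by rewrite /Cst !mulr_ge0 ?powR_ge0 // ltW.
apply/lee_addgt0Pr => e e0.
set lam := Cst * n + e.
have lam0 : 0 < lam by rewrite /lam ltr_wpDl // mulr_ge0.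
rewrite -EFinD; apply: ereal_inf_lbound; exists lam => //; split => //.
under eq_integral => y _ do rewrite mulrC.
apply: (@key_bound w) => //; first by rewrite invr_gt0.
have qi0 : q^-1 != 0 by rewrite invr_eq0 gt_eqF.
have wq : (w `^ q^-1) `^ q = w by rewrite -powRrM mulVf ?gt_eqF // powRr1.
rewrite -[X in _ * X <= _]wq -powRM; last 2 first.
- by rewrite !mulr_ge0 ?invr_ge0 ?ltW.
- exact: powR_ge0.
apply: powR_le1; first exact: ltW.
  by rewrite !mulr_ge0 ?invr_ge0 ?powR_ge0 ?ltW.
have -> : 2 * lam^-1 * D * w `^ q^-1 = (Cst * n) / lam.
  have aux : forall (x y z v : R), 2 * v^-1 * x * (y * z) = 2 * x * y * z / v by move=> *; ring.
  have ki0 : 0 <= (kap q)^-1 by rewrite invr_ge0 ltW.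
  by rewrite /Cst /n /w powRM //; exact: aux.
by rewrite ler_pdivrMr // mul1r /lam lerDl ltW.
Qed.

End Suff.

Lemma geo_bound {R : realType} (a rho : R) : 0 <= a -> 0 <= rho -> rho < 1 ->
  (\sum_(n <oo) (a * rho ^+ n)%:E <= (a / (1 - rho))%:E)%E.
Proof.
move=> a0 r0 r1.
apply: lime_le.
  by apply: is_cvg_nneseries => n _ _; rewrite lee_fin mulr_ge0 // exprn_ge0.
apply: nearW => N; rewrite sumEFin lee_fin.
have := congr1 (fun s => s N) (@geometric_seriesE R a rho (negbT (lt_eqF r1))).
rewrite /series /= => ->.
rewrite ler_pM2r ?invr_gt0 ?subr_gt0 //.
by rewrite ler_piMr // lerBlDr lerDl exprn_ge0.
Qed.

Section Ind.
Context {R : realType} {d} {X : measurableType d} (mu : {measure set X -> \bar R}).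
Context (p q : R) (E : set X) (r : R).
Hypothesis hp : 0 < p.
Hypothesis hq : 0 < q.
Hypothesis mE : measurable E.
Hypothesis muE : mu E = r%:E.
Hypothesis r0 : 0 < r.

Let f : X -> R := \1_E.

Lemma dm_ind_le t : 0 <= t -> (dm mu f t <= r%:E)%E.
Proof.
move=> t0; rewrite -muE; apply: le_measure; rewrite ?inE //.
  by apply: mS; exact: measurable_indic.
move=> x /=; rewrite /f indicE; case: (boolP (x \in E)) => [/set_mem //|_].
by rewrite normr0 ltNge t0.
Qed.

Lemma dm_ind_0 t : 1 <= t -> dm mu f t = 0%E.
Proof.
move=> t1; rewrite /dm (_ : [set x | _] = set0) ?measure0 //.
apply/seteqP; split => x //= ; rewrite /f indicE.
case: (x \in E); rewrite ?normr1 ?normr0 => h.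
  by move: (lt_le_trans h t1); rewrite ltxx.
by move: (lt_le_trans h (le_trans ler01 t1)); rewrite ltxx.
Qed.

Lemma rho_lt1 : 2 `^ (- q) < 1 :> R.
Proof.
rewrite /powR pnatr_eq0 /= -[ltRHS]expR0 ltr_expR mulNr oppr_lt0 mulr_gt0 //.
by apply: ln_gt0; lra.
Qed.

Lemma lorentz_ind_le :
  (Lint mu p q f <= ((r `^ p^-1) `^ q / (1 - 2 `^ (- q)))%:E)%E.
Proof.
pose tn n : R := p2 (- (n%:Z)).
pose J n : set R := [set` `]tn n / 2, tn n]].
set a := (r `^ p^-1) `^ q.
set rho := 2 `^ (- q) : R.
pose c n : R := ((tn n * r `^ p^-1) `^ q) * (tn n / 2)^-1.
have tn0 n : 0 < tn n by apply: p2_gt0.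
have c0 n : 0 <= c n by rewrite mulr_ge0 ?powR_ge0 // invr_ge0 divr_ge0 // ltW.
have ctn n : c n * (tn n / 2) = a * rho ^+ n.
  rewrite /c mulfVK; last by rewrite mulf_neq0 ?gt_eqF ?invr_gt0.
  rewrite powRM ?powR_ge0 ?(ltW (tn0 n)) // mulrC /a; congr (_ * _).
  rewrite /tn /p2 -powRrM -powR_mulrn; last exact: powR_ge0.
  by rewrite /rho -powRrM intrN !mulNr mulrC.
have int_step : (\int[@lebesgue_measure R]_(t in `]0%R, +oo[%classic)
    (\sum_(n <oo) ((c n)%:E * (\1_(J n) t)%:E)) = \sum_(n <oo) (a * rho ^+ n)%:E)%E.
  rewrite integral_nneseries //; last 2 first.
  - move=> n; apply: measurable_funeM; apply/measurable_EFinP.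
    by apply: measurable_indic; exact: measurable_itv.
  - by move=> n t _; rewrite mule_ge0 // lee_fin ?indic_ge0.
  apply: eq_eseriesr => n _.
  rewrite ge0_integralZl //; last 2 first.
  - by apply/measurable_EFinP; apply: measurable_indic; exact: measurable_itv.
  - by rewrite lee_fin.
  rewrite integral_indic //; last exact: measurable_itv.
  rewrite setIidl; last first.
    move=> t /=; rewrite !in_itv /= andbT => /andP[+ _]; apply: le_lt_trans.
    by rewrite divr_ge0 // ltW.
  have LJ : lebesgue_measure (J n) = ((tn n / 2)%:E : \bar R).
    rewrite /J lebesgue_measure_itv /= lte_fin ltr_pdivrMr ?ltr0n // ltr_pMr ?ltr1n //.
    by rewrite -EFinB; congr (_%:E); field.
  by rewrite [X in (_ * X)%E](_ : _ = (tn n / 2)%:E) -?EFinM ?ctn //; exact: LJ.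
apply: (@le_trans _ _ (\int[@lebesgue_measure R]_(t in `]0%R, +oo[%classic)
    (\sum_(n <oo) ((c n)%:E * (\1_(J n) t)%:E)))%E); last first.
  rewrite int_step; apply: geo_bound; rewrite ?powR_ge0 //; exact: rho_lt1.
apply: le_integral_nm.
  by move=> t /=; rewrite in_itv /= andbT => t0; exact: LF_ge0.
move=> t /=; rewrite in_itv /= andbT => t0.
have S0 : (0 <= \sum_(n <oo) ((c n)%:E * (\1_(J n) t)%:E))%E.
  by apply: nneseries_ge0 => n _ _; rewrite mule_ge0 // lee_fin ?indic_ge0.
have [t1|t1] := leP t 1; last first.
  rewrite /LF dm_ind_0; last exact: ltW.
  rewrite poweR0r ?invr_eq0 ?gt_eqF // mule0.
  by rewrite poweR0r ?gt_eqF // mul0e.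
have [k /andP[k1 k2]] := @p2_cover R t t0.
have k1le : k + 1 <= 0.
  rewrite leNgt; apply/negP => kp.
  have : p2 0 <= p2 k :> R by apply: p2_le; rewrite -ltzD1.
  by rewrite /p2 powRr0 => h; have := le_lt_trans h (lt_le_trans k1 t1); rewrite ltxx.
set n := absz (k + 1).
have nk : - (n%:Z) = k + 1 by rewrite /n -[RHS]opprK -(lez0_abs k1le).
have tnk : tn n = p2 (k + 1) by rewrite /tn nk.
have Jn : J n t.
  rewrite /J /= in_itv /= tnk k2 andbT p2S.
  by have -> : 2 * (p2 k : R) / 2 = p2 k by field.
rewrite (@nneseriesD1 _ _ n xpredT) //; last first.
  by move=> j _; rewrite mule_ge0 // lee_fin ?indic_ge0.
apply: le_trans (leeDl _ _); last first.
  by apply: nneseries_ge0 => j _ _; rewrite mule_ge0 // lee_fin ?indic_ge0.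
rewrite indicE mem_set // mule1.
move: Jn; rewrite /J /= in_itv /= => /andP[a1 a2].
have tn2 : 0 < tn n / 2 by rewrite divr_gt0.
rewrite /LF /c EFinM; apply: lee_pmul.
- exact: poweR_ge0.
- by rewrite lee_fin invr_ge0 ltW.
- rewrite -poweR_EFin; apply: gt0_ler_poweR; first exact: ltW.
  + by rewrite in_itv /= leey andbT mule_ge0 ?poweR_ge0 // lee_fin ltW.
  + by rewrite in_itv /= leey andbT lee_fin mulr_ge0 ?powR_ge0 // ltW.
  rewrite EFinM; apply: lee_pmul; rewrite ?poweR_ge0 ?lee_fin //; first exact: ltW.
  rewrite -poweR_EFin; apply: gt0_ler_poweR; first by rewrite invr_ge0 ltW.
  + by rewrite in_itv /= leey andbT measure_ge0.
  + by rewrite in_itv /= leey andbT lee_fin ltW.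
  exact: dm_ind_le (ltW t0).
- by rewrite lee_fin lef_pV2 // ?posrE // ltW.
Qed.

End Ind.

Theorem theorem1p6 (R : realType)
  (d1 : measure_display) (X : measurableType d1)
  (d2 : measure_display) (Y : measurableType d2)
  (mu : {measure set X -> \bar R}) (nu : {measure set Y -> \bar R})
  (tau : Y -> X) (p q : R) (Phi : R -> R) :
  sigma_finite setT mu -> sigma_finite setT nu ->
  measurable_fun setT tau ->
  (forall E : set X, measurable E -> mu E = 0%E -> nu (tau @^-1` E) = 0%E) ->
  0 < p -> 0 < q ->
  young_function (fun t => Phi (t `^ q^-1)) ->
  (exists C : R, forall f : X -> R, in_lorentz mu p q f ->
      in_orlicz nu Phi (f \o tau) /\
      (orlicz_norm nu Phi (f \o tau) <= C%:E * lorentz_norm mu p q f)%E)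
  <->
  (exists D : R, 1 <= D /\
     forall E : set X, measurable E ->
       (nu (tau @^-1` E) <= measure_bound Phi p D (mu E))%E).
Proof.
move=> _ _ mtau hns hp hq hY; split; last first.
  case=> D [hD hB]; exists (Cst q D) => f [mf NF].
  exact: (@suff_f _ _ _ _ _ mu nu tau p q D Phi mtau hp hq hY hD hB f mf NF).
case=> C HC.
set rho : R := 2 `^ (- q).
have rho1 : rho < 1 by apply: rho_lt1.
set Kc := (1 - rho)^-1 `^ q^-1.
have Kc0 : 0 <= Kc by apply: powR_ge0.
set D := 1 + `|C| * Kc.
have hD : 1 <= D by rewrite lerDl mulr_ge0.
have D0 : 0 < D by apply: lt_le_trans hD.
exists D; split => // E mE.
have mF : measurable (tau @^-1` E) by rewrite -[X in measurable X]setTI; exact: mtau.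
case eM: (mu E) => [r| |]; last 2 first.
- by rewrite /measure_bound leey.
- by rewrite /measure_bound leey.
have r0 : 0 <= r by rewrite -lee_fin -eM measure_ge0.
rewrite /measure_bound; case: eqP => [rz|rn0].
  by rewrite hns // eM rz.
have rp : 0 < r by rewrite lt_neqAle eq_sym r0 andbT; apply/eqP.
have rpp : 0 < r `^ p^-1 by apply: powR_gt0.
set u := 1 / (D * r `^ p^-1).
have u0 : 0 < u by rewrite divr_gt0 // mulr_gt0.
have s0 := @Phi_gt0 _ q Phi hq hY _ u0.
rewrite gt_eqF //.
set f : X -> R := \1_E.
have mf : measurable_fun setT f by apply: measurable_indic.
have LI := @lorentz_ind_le _ _ _ mu p q E r hp hq mE eM rp.
have I0 : (0 <= Lint mu p q f)%E.
  by apply: integral_ge0 => t /=; rewrite in_itv /= andbT => t0; exact: LF_ge0.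
have qi0 : 0 <= q^-1 by rewrite invr_ge0 ltW.
have Nle : (lorentz_norm mu p q f <= ((r `^ p^-1) * Kc)%:E)%E.
  rewrite lorentz_normE; apply: le_trans (gt0_ler_poweR qi0 _ _ LI) _.
  - by rewrite in_itv /= leey andbT.
  - by rewrite in_itv /= leey andbT lee_fin divr_ge0 ?powR_ge0 // subr_ge0 ltW.
  rewrite poweR_EFin lee_fin le_eqVlt; apply/orP; left; apply/eqP.
  rewrite powRM ?powR_ge0 ?invr_ge0 ?subr_ge0 ?(ltW rho1) //.
  by rewrite -powRrM mulfV ?gt_eqF // powRr1 // powR_ge0.
have NF : (lorentz_norm mu p q f < +oo)%E by apply: le_lt_trans Nle _; rewrite ltey.
have [_ ON] := HC f (conj mf NF).
have N0 : (0 <= lorentz_norm mu p q f)%E by apply: poweR_ge0.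
have OL : (orlicz_norm nu Phi (f \o tau) < (D * r `^ p^-1)%:E)%E.
  apply: le_lt_trans ON _.
  move: N0 Nle; case: (lorentz_norm mu p q f) => [nn| |] //.
  rewrite !lee_fin -EFinM lte_fin => nn0 nnle.
  apply: le_lt_trans (ler_wpM2r nn0 (ler_norm C)) _.
  apply: le_lt_trans (ler_wpM2l (normr_ge0 C) nnle) _.
  rewrite /D; nra.
have [_ [lam [lam0 Ilam] <-] ylt] := ereal_inf_lt OL.
rewrite lte_fin in ylt.
have P1 : 0 <= Phi (1 / lam) by apply: (@Phi_ge0 _ q Phi hq hY); rewrite divr_ge0 // ltW.
have key : ((Phi (1 / lam))%:E * nu (tau @^-1` E) <= 1)%E.
  apply: le_trans Ilam.
  rewrite -(setIT (tau @^-1` E)) -integral_indic // -ge0_integralZl_EFin //; last first.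
    by apply/measurable_EFinP; apply: measurable_indic.
  apply: le_integral_nm.
    by move=> y _; rewrite mule_ge0 // lee_fin indic_ge0.
  move=> y _; rewrite /= /f !indicE.
  case: (boolP (tau y \in E)) => h.
    have -> : (y \in tau @^-1` E) = true by exact: h.
    by rewrite mule1 normr1.
  have -> : (y \in tau @^-1` E) = false by apply/negbTE.
  by rewrite mule0 normr0 mul0r lee_fin (@Phi_ge0 _ q Phi hq hY).
have sle : Phi u <= Phi (1 / lam).
  apply: (@Phi_mono _ q Phi hq hY); first exact: ltW.
  by rewrite /u !div1r lef_pV2 ?posrE ?mulr_gt0 // ltW.
rewrite -(mule1 ((Phi u)^-1)%:E) lee_pdivlMl //.
apply: le_trans key; apply: lee_wpmul2r; first exact: measure_ge0.
by rewrite lee_fin.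
Qed.
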